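(* Let $\Omega$ be a set, $G=S_\Omega$, $H\subseteq G$ any set of permutations, and $\mathcal Q$ a second-order structure on $\Omega$. (1) A first-order or second-order relation $Q$ on $\Omega$ (of finite type) belongs to $\mathrm{Inv}(\mathrm{Aut}(\mathcal Q))$ if and only if $Q$ is definable in $\mathscr L_{\infty\infty}(\mathcal Q)$. (2) $\mathrm{Aut}(\mathrm{Inv}(H))$ is the smallest subgroup of $G$ including $H$.
   Context: A (finite) second-order relation of type $(i_1,\dots,i_k)$ on $\Omega$ is a subset of $\mathcal P(\Omega^{i_1})\times\cdots\times\mathcal P(\Omega^{i_k})$ with $k,i_1,\dots,i_k$ finite; a first-order relation is a subset of $\Omega^n$, $n$ finite. A second-order structure on $\Omega$ is a set of first-order and second-order relations of this kind. A permutation $g$ preserves a first-order relation $R$ if $gR=R$, and preserves a second-order relation $Q$ of type $(i_1,\dots,i_k)$ if for all $R_j\subseteq\Omega^{i_j}$: $(R_1,\dots,R_k)\in Q$ iff $(gR_1,\dots,gR_k)\in Q$. $\mathrm{Aut}(\mathcal Q)$ is the set of permutations of $\Omega$ preserving every member of $\mathcal Q$; $\mathrm{Inv}(H)$ is the set of all (finite-type) first-order and second-order relations on $\Omega$ preserved by every $h\in H$. $\mathscr L_{\infty\infty}(\mathcal Q)$ is the infinitary logic with equality (arbitrary conjunctions and disjunctions, quantification over arbitrary sequences of variables) with a predicate symbol for each first-order relation of $\mathcal Q$ and a generalized quantifier symbol for each second-order relation of $\mathcal Q$, interpreted on $\Omega$ in the standard Lindström way: for $Q$ of type $(i_1,\dots,i_k)$,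 $\bar Q\,\bar x_1\dots\bar x_k(\phi_1,\dots,\phi_k)$ holds under an assignment iff $(\|\phi_1\|,\dots,\|\phi_k\|)\in Q$, where $\|\phi_j\|$ is the set of $i_j$-tuples satisfying $\phi_j$ in the variables $\bar x_j$. A first-order relation $R\subseteq\Omega^n$ is definable in $\mathscr L_{\infty\infty}(\mathcal Q)$ if some formula $\phi(x_1,\dots,x_n)$ (without parameters) defines it in $(\Omega,\mathcal Q)$. A second-order relation $Q$ of type $(i_1,\dots,i_k)$ is definable in $\mathscr L_{\infty\infty}(\mathcal Q)$ if there is a sentence $\phi(\bar R_1,\dots,\bar R_k)$ of $\mathscr L_{\infty\infty}(\mathcal Q)$ expanded by new predicate symbols $\bar R_j$ of arity $i_j$ such that for all $R_j\subseteq\Omega^{i_j}$: $(\Omega,\mathcal Q,R_1,\dots,R_k)\models\phi$ iff $(R_1,\dots,R_k)\in Q$. *)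

(* Defs.v *)
From Stdlib Require Import Fin.


Definition FORel (Omega : Type) (n : nat) := (Fin.t n -> Omega) -> Prop.

Definition SORel (Omega : Type) (k : nat) (ty : Fin.t k -> nat) :=
  (forall j : Fin.t k, FORel Omega (ty j)) -> Prop.

Record Sig := {
  fsym : Type;
  far  : fsym -> nat;
  qsym : Type;
  qk   : qsym -> nat;
  qty  : forall q : qsym, Fin.t (qk q) -> nat }.

Record Structure (Omega : Type) (s : Sig) := {
  finterp : forall f : fsym s, FORel Omega (far s f);
  qinterp : forall q : qsym s, SORel Omega (qk s q) (qty s q) }.

Arguments finterp {Omega s} _ _.
Arguments qinterp {Omega s} _ _.
Set Implicit Arguments.

(* Formulas of L_{oo oo}(s) whose (free) variables range over X.
   Quantifiers bind an arbitrary family of new variables indexed by J;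
   a generalized quantifier binds, in its j-th argument, a tuple of
   (distinct) new variables of length qty q j. *)
Inductive formula (s : Sig) : Type -> Type :=
| FEq   : forall X : Type, X -> X -> formula s X
| FAtom : forall X : Type, forall f : fsym s, (Fin.t (far s f) -> X) -> formula s X
| FNot  : forall X : Type, formula s X -> formula s X
| FAnd  : forall X : Type, forall I : Type, (I -> formula s X) -> formula s X
| FOr   : forall X : Type, forall I : Type, (I -> formula s X) -> formula s X
| FEx   : forall X : Type, forall J : Type, formula s (X + J) -> formula s X
| FAll  : forall X : Type, forall J : Type, formula s (X + J) -> formula s X
| FGQ   : forall X : Type, forall q : qsym s,
            (forall j : Fin.t (qk s q), formula s (X + Fin.t (qty s q j))) ->
            formula s X.

Definition extend_asg (Omega X J : Type) (v : X -> Omega) (a : J -> Omega)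
  : X + J -> Omega :=
  fun x => match x with inl y => v y | inr j => a j end.

Fixpoint sat (Omega : Type) (s : Sig) (M : Structure Omega s)
  (X : Type) (phi : formula s X) {struct phi} : (X -> Omega) -> Prop :=
  match phi in formula _ X0 return (X0 -> Omega) -> Prop with
  | @FEq _ _ x y => fun v => v x = v y
  | @FAtom _ _ f xs => fun v => finterp M f (fun i => v (xs i))
  | @FNot _ _ psi => fun v => ~ sat M psi v
  | @FAnd _ _ _ fs => fun v => forall i, sat M (fs i) v
  | @FOr _ _ _ fs => fun v => exists i, sat M (fs i) v
  | @FEx _ _ J psi => fun v => exists a : J -> Omega, sat M psi (extend_asg v a)
  | @FAll _ _ J psi => fun v => forall a : J -> Omega, sat M psi (extend_asg v a)
  | @FGQ _ _ q fs => fun v =>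
      qinterp M q (fun j => fun a => sat M (fs j) (extend_asg v a))
  end.

(* Definability of a first-order relation: a formula whose free variables
   are exactly x_1..x_n (no parameters) defining R. *)
Definition fo_definable (Omega : Type) (s : Sig) (M : Structure Omega s)
  (n : nat) (R : FORel Omega n) : Prop :=
  exists phi : formula s (Fin.t n), forall t, sat M phi t <-> R t.

Definition sig_expand (s : Sig) (k : nat) (ty : Fin.t k -> nat) : Sig := {|
  fsym := fsym s + Fin.t k;
  far  := fun f => match f with inl f0 => far s f0 | inr j => ty j end;
  qsym := qsym s;
  qk   := qk s;
  qty  := qty s |}.

Definition struct_expand (Omega : Type) (s : Sig) (M : Structure Omega s)
  (k : nat) (ty : Fin.t k -> nat) (Rs : forall j, FORel Omega (ty j))
  : Structure Omega (sig_expand s ty) := {|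
  finterp := fun f => match f as f0 return FORel Omega (far (sig_expand s ty) f0) with
                      | inl f0 => finterp M f0
                      | inr j => Rs j end;
  qinterp := qinterp M |}.

Definition no_vars (Omega : Type) : Empty_set -> Omega :=
  fun e => match e with end.

Definition so_definable (Omega : Type) (s : Sig) (M : Structure Omega s)
  (k : nat) (ty : Fin.t k -> nat) (Q : SORel Omega k ty) : Prop :=
  exists phi : formula (sig_expand s ty) Empty_set,
    forall Rs : forall j, FORel Omega (ty j),
      sat (@struct_expand Omega s M k ty Rs) phi (@no_vars Omega) <-> Q Rs.

Definition bij (Omega : Type) (g : Omega -> Omega) : Prop :=
  exists h : Omega -> Omega, (forall x, h (g x) = x) /\ (forall x, g (h x) = x).

Definition fo_img (Omega : Type) (n : nat) (g : Omega -> Omega) (R : FORel Omega n)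
  : FORel Omega n :=
  fun t => exists u, R u /\ forall i, t i = g (u i).

Definition preserves_fo (Omega : Type) (n : nat) (g : Omega -> Omega) (R : FORel Omega n) :=
  forall t, fo_img g R t <-> R t.

Definition preserves_so (Omega : Type) (k : nat) (ty : Fin.t k -> nat)
  (g : Omega -> Omega) (Q : SORel Omega k ty) :=
  forall Rs : forall j, FORel Omega (ty j), Q Rs <-> Q (fun j => fo_img g (Rs j)).

Definition Aut (Omega : Type) (s : Sig) (M : Structure Omega s) (g : Omega -> Omega) :=
  bij g /\ (forall f, preserves_fo g (finterp M f))
        /\ (forall q, preserves_so g (qinterp M q)).

Definition Inv_fo (Omega : Type) (H : (Omega -> Omega) -> Prop) (n : nat) (R : FORel Omega n) :=
  forall h, H h -> preserves_fo h R.
Definition Inv_so (Omega : Type) (H : (Omega -> Omega) -> Prop)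
  (k : nat) (ty : Fin.t k -> nat) (Q : SORel Omega k ty) :=
  forall h, H h -> preserves_so h Q.

Definition AutInv (Omega : Type) (H : (Omega -> Omega) -> Prop) (g : Omega -> Omega) :=
  bij g
  /\ (forall (n : nat) (R : FORel Omega n), Inv_fo H R -> preserves_fo g R)
  /\ (forall (k : nat) (ty : Fin.t k -> nat) (Q : SORel Omega k ty),
        Inv_so H Q -> preserves_so g Q).

Definition is_subgroup (Omega : Type) (S : (Omega -> Omega) -> Prop) :=
  (forall g, S g -> bij g)
  /\ S (fun x => x)
  /\ (forall g h, S g -> S h -> S (fun x => g (h x)))
  /\ (forall g h, S g -> (forall x, h (g x) = x) -> (forall x, g (h x) = x) -> S h).

(* Main.v *)
Require Import Defs.
From Stdlib Require Import Fin.
From Stdlib Require Import Classical ClassicalEpsilon FunctionalExtensionality PropExtensionality.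
From mathcomp Require ssreflect ssrfun ssrbool eqtype boolp wochoice.

Module WO.
Import ssreflect ssrfun ssrbool eqtype boolp.

Lemma wo_exists (T : Type) : exists W : T -> T -> Prop,
  (forall A : T -> Prop, (exists x, A x) -> exists z, A z /\ forall x, A x -> W z x) /\
  (forall a b, W a b -> W b a -> a = b).
Proof.
have [R wo] := wochoice.well_ordering_principle {classic T}.
have key : forall A : T -> Prop, (exists x, A x) -> exists z, A z /\ forall x, A x -> R z x.
  move=> A [x Ax].
  have ne : wochoice.nonempty (fun y : {classic T} => asbool (A y)).
    by exists x; rewrite unfold_in; apply/asboolP.
  have [z [[Az lb] _]] := wo _ ne.
  exists z; split.
    by move: Az; rewrite unfold_in => /asboolP.
  move=> y Ay; apply: lb; rewrite unfold_in; exact/asboolP.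
have refl : forall a, R a a.
  move=> a; have [z [-> H]] := key (fun y => y = a) (ex_intro _ a erefl); exact: H.
exists (fun a b => R a b); split; first exact: key.
move=> a b Rab Rba.
pose A := fun y : {classic T} => asbool (y = a \/ y = b).
have ne : wochoice.nonempty A by exists a; rewrite unfold_in; apply/asboolP; left.
have [z [_ uq]] := wo _ ne.
have Ha : wochoice.minimum_of R A a.
  split; first by rewrite unfold_in; apply/asboolP; left.
  by move=> y; rewrite unfold_in => /asboolP [->|->].
have Hb : wochoice.minimum_of R A b.
  split; first by rewrite unfold_in; apply/asboolP; right.
  by move=> y; rewrite unfold_in => /asboolP [->|->].
by rewrite -(uq _ Ha) -(uq _ Hb).
Qed.
End WO.


Set Implicit Arguments.
Section Gen.
Variable Omega : Type.

Lemma fo_img_comp n (g h : Omega -> Omega) (R : FORel Omega n) :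
  fo_img g (fo_img h R) = fo_img (fun x => g (h x)) R.
Proof.
  apply functional_extensionality; intro t; apply propositional_extensionality; split.
  - intros [u [[w [Rw Hu]] Ht]]. exists w; split; auto. intro i; rewrite Ht, Hu; reflexivity.
  - intros [w [Rw Ht]]. exists (fun i => h (w i)); split; auto. exists w; split; auto.
Qed.

Lemma fo_img_id n (R : FORel Omega n) : fo_img (fun x => x) R = R.
Proof.
  apply functional_extensionality; intro t; apply propositional_extensionality; split.
  - intros [u [Ru Ht]]. replace t with u; auto. apply functional_extensionality; intro i; auto.
  - intros Rt; exists t; split; auto.
Qed.

Lemma pres_eq n (g : Omega -> Omega) (R : FORel Omega n) : preserves_fo g R -> fo_img g R = R.
Proof.
  intro P; apply functional_extensionality; intro t; apply propositional_extensionality; apply P.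
Qed.

Lemma bij_inj (g : Omega -> Omega) : bij g -> forall x y, g x = g y -> x = y.
Proof. intros [h [H1 H2]] x y E. rewrite <- (H1 x), <- (H1 y), E; reflexivity. Qed.

Lemma fo_img_inj n (g : Omega -> Omega) (R : FORel Omega n) u : bij g ->
  fo_img g R (fun i => g (u i)) <-> R u.
Proof.
  intro B; split.
  - intros [w [Rw Hw]]. replace u with w; auto. apply functional_extensionality; intro i.
    symmetry; apply (bij_inj B); auto.
  - intro Ru; exists u; split; auto.
Qed.

Lemma pres_of_iff n (g : Omega -> Omega) (R : FORel Omega n) : bij g ->
  (forall u, R (fun i => g (u i)) <-> R u) -> preserves_fo g R.
Proof.
  intros B Hu t; split.
  - intros [u [Ru Ht]]. replace t with (fun i => g (u i)).
    + apply Hu; auto.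
    + apply functional_extensionality; intro i; auto.
  - intro Rt. destruct B as [h [H1 H2]]. exists (fun i => h (t i)). split.
    + apply Hu. replace (fun i => g (h (t i))) with t; auto.
      apply functional_extensionality; intro i; auto.
    + intro i; auto.
Qed.

Lemma iff_of_pres n (g : Omega -> Omega) (R : FORel Omega n) : bij g -> preserves_fo g R ->
  forall u, R (fun i => g (u i)) <-> R u.
Proof.
  intros B P u. rewrite <- (fo_img_inj R u B). rewrite (pres_eq P). tauto.
Qed.

Lemma fo_img_inv n (g h : Omega -> Omega) (R : FORel Omega n) : (forall x, h (g x) = x) ->
  fo_img h (fo_img g R) = R.
Proof.
  intro H1. rewrite fo_img_comp.
  replace (fun x => h (g x)) with (fun x : Omega => x).
  - apply fo_img_id.
  - apply functional_extensionality; intro; auto.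
Qed.

Lemma ext_comp X J (g : Omega -> Omega) (v : X -> Omega) (a : J -> Omega) :
  extend_asg (fun x => g (v x)) (fun j => g (a j)) = (fun x => g (extend_asg v a x)).
Proof. apply functional_extensionality; intros [y|j]; reflexivity. Qed.

Lemma sat_iso s (M1 M2 : Structure Omega s) (g : Omega -> Omega) (B : bij g)
  (HF : forall f u, finterp M2 f (fun i => g (u i)) <-> finterp M1 f u)
  (HQ : forall q Rs, qinterp M2 q (fun j => fo_img g (Rs j)) <-> qinterp M1 q Rs) :
  forall X (phi : formula s X) v, sat M2 phi (fun x => g (v x)) <-> sat M1 phi v.
Proof.
  pose proof B as B'. destruct B' as [h [H1 H2]].
  induction phi; intro v; simpl.
  - split; intro E; [apply (bij_inj B); auto | rewrite E; reflexivity].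
  - apply HF.
  - rewrite IHphi; tauto.
  - split; intros A i; apply H; auto.
  - split; intros [i A]; exists i; apply H; auto.
  - split.
    + intros [a A]. exists (fun j => h (a j)). apply IHphi.
      rewrite <- ext_comp. replace (fun j => g (h (a j))) with a; auto.
      apply functional_extensionality; intro; auto.
    + intros [a A]. exists (fun j => g (a j)). rewrite ext_comp. apply IHphi; auto.
  - split.
    + intros A a. apply IHphi. rewrite <- ext_comp. apply A.
    + intros A a. replace a with (fun j => g (h (a j))).
      * rewrite ext_comp. apply IHphi; auto.
      * apply functional_extensionality; intro; auto.
  - rewrite <- HQ. match goal with |- qinterp _ _ ?A <-> qinterp _ _ ?B =>
      assert (E : A = B); [|rewrite E; tauto] end.
    apply functional_extensionality_dep; intro j.
    apply functional_extensionality; intro a; apply propositional_extensionality; split.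
    + intro A. exists (fun i => h (a i)). split.
      * apply H. rewrite <- ext_comp. replace (fun i => g (h (a i))) with a; auto.
        apply functional_extensionality; intro; auto.
      * intro i; auto.
    + intros [u [Hu Ha]]. replace a with (fun i => g (u i)).
      * rewrite ext_comp. apply H; auto.
      * apply functional_extensionality; intro; auto.
Qed.


Lemma aut_iso s (M : Structure Omega s) (g : Omega -> Omega) : Aut M g ->
  (forall f u, finterp M f (fun i => g (u i)) <-> finterp M f u) /\ (forall q Rs, qinterp M q (fun j => fo_img g (Rs j)) <-> qinterp M q Rs).
Proof.
  intros [B [PF PQ]]. split.
  - intros f u; apply iff_of_pres; auto.
  - intros q Rs; symmetry; apply PQ.
Qed.

Lemma def_inv_fo s (M : Structure Omega s) n (R : FORel Omega n) :
  fo_definable M R -> Inv_fo (Aut M) R.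
Proof.
  intros [phi Hphi] g A. pose proof (aut_iso A) as [HF HQ].
  destruct A as [B _]. apply pres_of_iff; auto. intro u.
  rewrite <- !Hphi. apply (sat_iso M M B HF HQ).
Qed.

Lemma def_inv_so s (M : Structure Omega s) k (ty : Fin.t k -> nat) (Q : SORel Omega k ty) :
  so_definable M Q -> Inv_so (Aut M) Q.
Proof.
  intros [phi Hphi] g A Rs. pose proof (aut_iso A) as [HF HQ].
  destruct A as [B _]. rewrite <- !Hphi.
  assert (E : (fun x : Empty_set => g (no_vars Omega x)) = no_vars Omega).
  { apply functional_extensionality; intros []. }
  symmetry. rewrite <- E at 1. apply (sat_iso (struct_expand M ty Rs) (struct_expand M ty (fun j => fo_img g (Rs j))) B).
  - intros [f|j] u; simpl.
    + apply HF.
    + apply fo_img_inj; auto.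
  - intros q Rs'; simpl. apply HQ.
Qed.

End Gen.
Section Constr.
Variable Omega : Type.

Definition fand2 s X (a b : formula s X) : formula s X :=
  FAnd (fun b0 : bool => if b0 then a else b).

Lemma sat_fand2 s (M : Structure Omega s) X (a b : formula s X) v :
  sat M (fand2 a b) v <-> sat M a v /\ sat M b v.
Proof.
  simpl. split.
  - intro H; split; [apply (H true)|apply (H false)].
  - intros [A B] [|]; auto.
Qed.

Definition ImgF s Y (e : Omega -> Y) n (R : FORel Omega n) : formula s (Y + Fin.t n) :=
  FOr (fun p : {u : Fin.t n -> Omega | R u} =>
    FAnd (fun i : Fin.t n => FEq s (inr i) (inl (e (proj1_sig p i))))).

Lemma sat_ImgF s (M : Structure Omega s) Y (e : Omega -> Y) n (R : FORel Omega n) w a :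
  sat M (ImgF s e R) (extend_asg w a) <-> fo_img (fun x => w (e x)) R a.
Proof.
  simpl. split.
  - intros [[u Ru] H]. exists u; split; auto.
  - intros [u [Ru H]]. exists (exist _ u Ru). auto.
Qed.

Variable s : Sig.
Variable M : Structure Omega s.

Definition INJ X : formula s (X + Omega) :=
  FAnd (fun p : {p : Omega * Omega | fst p <> snd p} =>
    FNot (FEq s (inr (fst (proj1_sig p))) (inr (snd (proj1_sig p))))).
Definition SURJ X : formula s (X + Omega) :=
  FAll (J := unit) (FOr (fun a : Omega => FEq s (inr tt) (inl (inr a)))).
Definition APOS X : formula s (X + Omega) :=
  FAnd (fun p : {fu : {f : fsym s & Fin.t (far s f) -> Omega} | finterp M (projT1 fu) (projT2 fu)} =>
    FAtom s (projT1 (proj1_sig p)) (fun i => inr (projT2 (proj1_sig p) i))).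
Definition ANEG X : formula s (X + Omega) :=
  FAnd (fun p : {fu : {f : fsym s & Fin.t (far s f) -> Omega} | ~ finterp M (projT1 fu) (projT2 fu)} =>
    FNot (FAtom s (projT1 (proj1_sig p)) (fun i => inr (projT2 (proj1_sig p) i)))).
Definition QPOS X : formula s (X + Omega) :=
  FAnd (fun p : {qR : {q : qsym s & forall j, FORel Omega (qty s q j)} | qinterp M (projT1 qR) (projT2 qR)} =>
    FGQ (projT1 (proj1_sig p)) (fun j => ImgF s (fun x : Omega => (inr x : X + Omega)) (projT2 (proj1_sig p) j))).
Definition QNEG X : formula s (X + Omega) :=
  FAnd (fun p : {qR : {q : qsym s & forall j, FORel Omega (qty s q j)} | ~ qinterp M (projT1 qR) (projT2 qR)} =>
    FNot (FGQ (projT1 (proj1_sig p)) (fun j => ImgF s (fun x : Omega => (inr x : X + Omega)) (projT2 (proj1_sig p) j)))).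

Definition AutF X : formula s (X + Omega) :=
  fand2 (fand2 (INJ X) (SURJ X)) (fand2 (fand2 (APOS X) (ANEG X)) (fand2 (QPOS X) (QNEG X))).

Definition AutC (y : Omega -> Omega) : Prop :=
  ((forall a b, a <> b -> y a <> y b) /\ (forall z, exists a, z = y a)) /\
  ((forall f u, finterp M f u -> finterp M f (fun i => y (u i))) /\
   (forall f u, ~ finterp M f u -> ~ finterp M f (fun i => y (u i)))) /\
  ((forall q Rs, qinterp M q Rs -> qinterp M q (fun j => fo_img y (Rs j))) /\
   (forall q Rs, ~ qinterp M q Rs -> ~ qinterp M q (fun j => fo_img y (Rs j)))).

Lemma GQ_eq X (v : X -> Omega) y q (Rs : forall j, FORel Omega (qty s q j)) :
  (fun j a => sat M (ImgF s (fun x : Omega => (inr x : X + Omega)) (Rs j)) (extend_asg (extend_asg v y) a))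
  = (fun j => fo_img y (Rs j)).
Proof.
  apply functional_extensionality_dep; intro j.
  apply functional_extensionality; intro a; apply propositional_extensionality.
  apply sat_ImgF.
Qed.

Lemma GQ_eq2 q (Rs : forall j, FORel Omega (qty s q j)) (y : Omega -> Omega) :
  (fun (j : Fin.t (qk s q)) (a : Fin.t (qty s q j) -> Omega) =>
    exists i : {u : Fin.t (qty s q j) -> Omega | Rs j u},
      forall i0 : Fin.t (qty s q j), a i0 = y (proj1_sig i i0))
  = (fun j => fo_img y (Rs j)).
Proof.
  apply functional_extensionality_dep; intro j.
  apply functional_extensionality; intro a; apply propositional_extensionality.
  split.
  - intros [[u Ru] H]. exists u; split; auto.
  - intros [u [Ru H]]. exists (exist _ u Ru). auto.
Qed.

Lemma sat_INJ X (v : X -> Omega) y :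
  sat M (INJ X) (extend_asg v y) <-> (forall a b, a <> b -> y a <> y b).
Proof.
  simpl. split.
  - intros H a b ab. apply (H (exist _ (a, b) ab)).
  - intros H [[a b] ab]. apply H; auto.
Qed.

Lemma sat_SURJ X (v : X -> Omega) y :
  sat M (SURJ X) (extend_asg v y) <-> (forall z, exists a, z = y a).
Proof.
  simpl. split.
  - intros H z. apply (H (fun _ => z)).
  - intros H a. apply H.
Qed.

Lemma sat_APOS X (v : X -> Omega) y :
  sat M (APOS X) (extend_asg v y) <-> (forall f u, finterp M f u -> finterp M f (fun i => y (u i))).
Proof.
  simpl. split.
  - intros H f u Fu. apply (H (exist _ (existT _ f u) Fu)).
  - intros H [[f u] Fu]. apply H; auto.
Qed.

Lemma sat_ANEG X (v : X -> Omega) y :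
  sat M (ANEG X) (extend_asg v y) <-> (forall f u, ~ finterp M f u -> ~ finterp M f (fun i => y (u i))).
Proof.
  simpl. split.
  - intros H f u Fu. apply (H (exist _ (existT _ f u) Fu)).
  - intros H [[f u] Fu]. apply H; auto.
Qed.

Lemma sat_QPOS X (v : X -> Omega) y :
  sat M (QPOS X) (extend_asg v y) <-> (forall q Rs, qinterp M q Rs -> qinterp M q (fun j => fo_img y (Rs j))).
Proof.
  simpl. split.
  - intros H q Rs Q. pose proof (H (exist _ (existT _ q Rs) Q)) as H'. simpl in H'.
    rewrite GQ_eq2 in H'. exact H'.
  - intros H [[q Rs] Q]. simpl. rewrite GQ_eq2. apply H; auto.
Qed.

Lemma sat_QNEG X (v : X -> Omega) y :
  sat M (QNEG X) (extend_asg v y) <-> (forall q Rs, ~ qinterp M q Rs -> ~ qinterp M q (fun j => fo_img y (Rs j))).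
Proof.
  simpl. split.
  - intros H q Rs Q. pose proof (H (exist _ (existT _ q Rs) Q)) as H'. simpl in H'.
    rewrite GQ_eq2 in H'. exact H'.
  - intros H [[q Rs] Q]. simpl. rewrite GQ_eq2. apply H; auto.
Qed.

Lemma sat_AutF X (v : X -> Omega) y : sat M (AutF X) (extend_asg v y) <-> AutC y.
Proof.
  unfold AutF, AutC. rewrite !sat_fand2.
  rewrite sat_INJ, sat_SURJ, sat_APOS, sat_ANEG, sat_QPOS, sat_QNEG. tauto.
Qed.

End Constr.
Section Def.
Variable Omega : Type.
Variable s : Sig.
Variable M : Structure Omega s.

Lemma AutC_Aut (y : Omega -> Omega) : AutC M y <-> Aut M y.
Proof.
  split.
  - intros [[inj surj] [[ap an] [qp qn]]].
    assert (B : bij y).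
    { exists (fun z => proj1_sig (constructive_indefinite_description _ (surj z))). split.
      - intro x. destruct (constructive_indefinite_description _ (surj (y x))) as [a Ha]; simpl.
        apply NNPP; intro ne. apply (inj _ _ ne). auto.
      - intro z. destruct (constructive_indefinite_description _ (surj z)) as [a Ha]; simpl. auto. }
    split; [exact B|split].
    + intro f. apply pres_of_iff; auto. intro u; split; [|apply ap].
      intro H. destruct (classic (finterp M f u)) as [|n]; auto. exfalso; apply (an f u n H).
    + intros q Rs; split; [apply qp|].
      intro H. destruct (classic (qinterp M q Rs)) as [|n]; auto. exfalso; apply (qn q Rs n H).
  - intro A. pose proof (aut_iso A) as [HF HQ]. destruct A as [B [PF PQ]].
    split; [split|split; split].
    + intros a b ab E. apply ab. apply (bij_inj B); auto.
    + destruct B as [h [H1 H2]]. intro z; exists (h z); auto.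
    + intros f u; apply HF.
    + intros f u; rewrite HF; auto.
    + intros q Rs; apply HQ.
    + intros q Rs; rewrite HQ; auto.
Qed.

Lemma Aut_id : Aut M (fun x => x).
Proof.
  split; [|split].
  - exists (fun x => x); split; auto.
  - intros f t. rewrite fo_img_id. tauto.
  - intros q Rs. replace (fun j => fo_img (fun x : Omega => x) (Rs j)) with Rs; [tauto|].
    apply functional_extensionality_dep; intro j. symmetry; apply fo_img_id.
Qed.

Lemma inv_def_fo n (R : FORel Omega n) : Inv_fo (Aut M) R -> fo_definable M R.
Proof.
  intro I.
  exists (FEx (J := Omega) (fand2 (AutF M (Fin.t n))
     (FOr (fun p : {t : Fin.t n -> Omega | R t} =>
        FAnd (fun i : Fin.t n => FEq s (inl i) (inr (proj1_sig p i))))))).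
  intro x; split.
  - intros [y H]. rewrite sat_fand2 in H. destruct H as [HA HB].
    rewrite sat_AutF, AutC_Aut in HA. simpl in HB. destruct HB as [[t Rt] Ht].
    apply (I y HA). exists t; split; auto.
  - intro Rx. exists (fun a => a). rewrite sat_fand2; split.
    + rewrite sat_AutF, AutC_Aut. apply Aut_id.
    + simpl. exists (exist _ x Rx). intro i; reflexivity.
Qed.

Fixpoint lift k (ty : Fin.t k -> nat) X (phi : formula s X) : formula (sig_expand s ty) X :=
  match phi in formula _ X0 return formula (sig_expand s ty) X0 with
  | @FEq _ _ x y => FEq _ x y
  | @FAtom _ _ f xs => FAtom (sig_expand s ty) (inl f) xs
  | @FNot _ _ p => FNot (lift ty p)
  | @FAnd _ _ _ fs => FAnd (fun i => lift ty (fs i))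
  | @FOr _ _ _ fs => FOr (fun i => lift ty (fs i))
  | @FEx _ _ _ p => FEx (lift ty p)
  | @FAll _ _ _ p => FAll (lift ty p)
  | @FGQ _ _ q fs => @FGQ (sig_expand s ty) _ q (fun j => lift ty (fs j))
  end.

Lemma sat_lift k (ty : Fin.t k -> nat) Rs X (phi : formula s X) :
  forall v, sat (struct_expand M ty Rs) (lift ty phi) v <-> sat M phi v.
Proof.
  induction phi; intro v; simpl.
  - tauto.
  - tauto.
  - rewrite IHphi; tauto.
  - split; intros A i; apply H; auto.
  - split; intros [i A]; exists i; apply H; auto.
  - split; intros [a A]; exists a; apply IHphi; auto.
  - split; intros A a; apply IHphi; auto.
  - match goal with |- qinterp _ _ ?A <-> qinterp _ _ ?B =>
      assert (E : A = B); [|rewrite E; tauto] end.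
    apply functional_extensionality_dep; intro j.
    apply functional_extensionality; intro a; apply propositional_extensionality.
    apply H.
Qed.

Lemma inv_def_so k (ty : Fin.t k -> nat) (Q : SORel Omega k ty) :
  Inv_so (Aut M) Q -> so_definable M Q.
Proof.
  intro I.
  exists (FEx (J := Omega) (fand2 (lift ty (AutF M Empty_set))
     (FOr (fun p : {Rs' : forall j, FORel Omega (ty j) | Q Rs'} =>
       fand2
        (FAnd (fun ju : {ju : {j : Fin.t k & Fin.t (ty j) -> Omega} | proj1_sig p (projT1 ju) (projT2 ju)} =>
          FAtom (sig_expand s ty) (inr (projT1 (proj1_sig ju))) (fun i => inr (projT2 (proj1_sig ju) i))))
        (FAnd (fun ju : {ju : {j : Fin.t k & Fin.t (ty j) -> Omega} | ~ proj1_sig p (projT1 ju) (projT2 ju)} =>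
          FNot (FAtom (sig_expand s ty) (inr (projT1 (proj1_sig ju))) (fun i => inr (projT2 (proj1_sig ju) i))))))))).
  intro Rs; split.
  - intros [y H]. rewrite sat_fand2 in H. destruct H as [HA HB].
    rewrite sat_lift, sat_AutF, AutC_Aut in HA.
    destruct HB as [[Rs' QRs'] HB]. rewrite sat_fand2 in HB. destruct HB as [HP HN].
    simpl in HP, HN.
    assert (E : Rs = fun j => fo_img y (Rs' j)).
    { apply functional_extensionality_dep; intro j.
      apply functional_extensionality; intro t; apply propositional_extensionality.
      pose proof HA as [[h [H1 H2]] _]. split.
      - intro Rt. destruct (classic (Rs' j (fun i => h (t i)))) as [Y|N].
        + exists (fun i => h (t i)); split; auto.
        + exfalso. apply (HN (exist _ (existT _ j (fun i => h (t i))) N)). simpl.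
          replace (fun i => y (h (t i))) with t; auto.
          apply functional_extensionality; intro; auto.
      - intros [u [Ru Ht]]. replace t with (fun i => y (u i)).
        + apply (HP (exist _ (existT _ j u) Ru)).
        + apply functional_extensionality; intro; auto. }
    rewrite E. apply (proj1 (I y HA Rs') QRs').
  - intro QRs. exists (fun a => a). rewrite sat_fand2; split.
    + rewrite sat_lift, sat_AutF, AutC_Aut. apply Aut_id.
    + exists (exist _ Rs QRs). rewrite sat_fand2; split; simpl.
      * intros [[j u] H]; auto.
      * intros [[j u] H]; auto.
Qed.

End Def.
Section Part2.
Variable Omega : Type.

Definition pair2 (a b : Omega) : Fin.t 2 -> Omega :=
  fun i => match i with @Fin.F1 _ => a | @Fin.FS _ _ => b end.

Definition W2 (W : Omega -> Omega -> Prop) : FORel Omega 2 :=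
  fun t => W (t Fin.F1) (t (Fin.FS Fin.F1)).

Lemma rigid (W : Omega -> Omega -> Prop)
  (Wmin : forall A : Omega -> Prop, (exists x, A x) -> exists z, A z /\ forall x, A x -> W z x)
  (Wanti : forall a b, W a b -> W b a -> a = b)
  (f : Omega -> Omega) (B : bij f) (P : preserves_fo f (W2 W)) : forall x, f x = x.
Proof.
  assert (Wf : forall a b, W (f a) (f b) <-> W a b).
  { intros a b. exact (iff_of_pres B P (pair2 a b)). }
  assert (tot : forall a b, W a b \/ W b a).
  { intros a b. destruct (Wmin (fun x => x = a \/ x = b)) as [z [[-> | ->] Hz]]; eauto. }
  pose proof B as [h [H1 H2]].
  apply NNPP; intro N. apply not_all_ex_not in N.
  destruct (Wmin (fun x => f x <> x) N) as [m [Am Hm]].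
  assert (below : forall x, W x m -> x <> m -> f x = x).
  { intros x Wxm xm. apply NNPP; intro Ax. pose proof (Hm x Ax) as Wmx.
    apply xm. apply (Wanti _ _ Wxm Wmx). }
  destruct (tot (f m) m) as [C|C].
  - apply Am. apply (bij_inj B). apply below; auto.
  - assert (Whm : W (h m) m). { apply Wf. rewrite H2. auto. }
    assert (hm : h m <> m). { intro E. apply Am. rewrite <- E at 1. apply H2. }
    apply hm. rewrite <- (below _ Whm hm). apply H2.
Qed.
End Part2.
Section Part2b.
Variable Omega : Type.

Lemma bij_comp (g h : Omega -> Omega) : bij g -> bij h -> bij (fun x => g (h x)).
Proof.
  intros [g' [G1 G2]] [h' [H1 H2]]. exists (fun x => h' (g' x)); split; intro x.
  - rewrite G1; auto.
  - rewrite H2; auto.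
Qed.

Lemma AutInv_sub (H : (Omega -> Omega) -> Prop) : is_subgroup (AutInv H).
Proof.
  split; [|split; [|split]].
  - intros g [B _]; exact B.
  - split; [|split].
    + exists (fun x => x); split; auto.
    + intros n R _ t. rewrite fo_img_id. tauto.
    + intros k ty Q _ Rs. replace (fun j => fo_img (fun x : Omega => x) (Rs j)) with Rs; [tauto|].
      apply functional_extensionality_dep; intro j. symmetry; apply fo_img_id.
  - intros g h [Bg [Pg Qg]] [Bh [Ph Qh]]. split; [apply bij_comp; auto|split].
    + intros n R I t. rewrite <- (fo_img_comp g h R).
      rewrite (pres_eq (Ph n R I)), (pres_eq (Pg n R I)). tauto.
    + intros k ty Q I Rs.
      replace (fun j => fo_img (fun x => g (h x)) (Rs j)) with (fun j => fo_img g (fo_img h (Rs j))).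
      * rewrite (Qh k ty Q I Rs). apply (Qg k ty Q I).
      * apply functional_extensionality_dep; intro j. apply fo_img_comp.
  - intros g h [Bg [Pg Qg]] H1 H2. split; [|split].
    + exists g; split; auto.
    + intros n R I. intro t. rewrite <- (pres_eq (Pg n R I)) at 1.
      rewrite fo_img_inv by exact H1. tauto.
    + intros k ty Q I Rs. rewrite (Qg k ty Q I (fun j => fo_img h (Rs j))).
      replace (fun j => fo_img g (fo_img h (Rs j))) with Rs; [tauto|].
      apply functional_extensionality_dep; intro j. symmetry; apply fo_img_inv; auto.
Qed.

Lemma AutInv_min (H : (Omega -> Omega) -> Prop) (HG : forall h, H h -> bij h)
  (S : (Omega -> Omega) -> Prop) : is_subgroup S -> (forall h, H h -> S h) ->
  forall g, AutInv H g -> S g.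
Proof.
  intros [SB [Sid [Scomp Sinv]]] HS g [Bg [_ Pg]].
  destruct (WO.wo_exists Omega) as [W [Wmin Wanti]].
  pose (Q := fun Rs : forall j : Fin.t 1, FORel Omega 2 =>
              exists s0, S s0 /\ forall j, Rs j = fo_img s0 (W2 W)).
  assert (IQ : Inv_so H (ty := fun _ => 2) Q).
  { intros h Hh Rs. pose proof (HG h Hh) as [h' [K1 K2]]. split.
    - intros [s0 [Ss E]]. exists (fun x => h (s0 x)). split; [apply Scomp; auto|].
      intro j. rewrite E. apply fo_img_comp.
    - intros [s0 [Ss E]]. exists (fun x => h' (s0 x)). split.
      + apply Scomp; auto. apply (Sinv h); auto.
      + intro j. rewrite <- (fo_img_inv h h' (Rs j) K1). rewrite E. apply fo_img_comp. }
  pose proof (Pg 1 (fun _ => 2) Q IQ (fun _ => W2 W)) as PQ.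
  destruct (proj1 PQ) as [s0 [Ss E]].
  { exists (fun x => x). split; auto. intro j. symmetry; apply fo_img_id. }
  specialize (E Fin.F1). simpl in E.
  pose proof (SB _ Ss) as [s' [T1 T2]].
  assert (Ss' : S s') by (apply (Sinv s0); auto).
  assert (R : forall x, s' (g x) = x).
  { apply (rigid Wmin Wanti).
    - exact (bij_comp (ex_intro _ s0 (conj T2 T1)) Bg).
    - intro t. rewrite <- (fo_img_comp s' g). rewrite E. rewrite (fo_img_inv s0 s' _ T1). tauto. }
  replace g with s0; auto.
  apply functional_extensionality; intro x. rewrite <- (T2 (g x)), (R x). reflexivity.
Qed.

End Part2b.

Theorem theorem2 (Omega : Type) (H : (Omega -> Omega) -> Prop)
  (HG : forall h, H h -> bij h) (s : Sig) (M : Structure Omega s) :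
  (* (1), first-order relations *)
  (forall (n : nat) (R : FORel Omega n),
      Inv_fo (Aut M) R <-> fo_definable M R)
  /\
  (* (1), second-order relations *)
  (forall (k : nat) (ty : Fin.t k -> nat) (Q : SORel Omega k ty),
      Inv_so (Aut M) Q <-> so_definable M Q)
  /\
  (* (2) Aut(Inv(H)) is the smallest subgroup of Sym(Omega) including H *)
  (is_subgroup (AutInv H)
   /\ (forall h, H h -> AutInv H h)
   /\ (forall S, is_subgroup S -> (forall h, H h -> S h) ->
         forall g, AutInv H g -> S g)).
Proof.
  split; [|split; [|split; [|split]]].
  - intros n R; split; [apply inv_def_fo | apply def_inv_fo].
  - intros k ty Q; split; [apply inv_def_so | apply def_inv_so].
  - apply AutInv_sub.
  - intros h Hh. split; [auto|split].
    + intros n R I. apply I; auto.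
    + intros k ty Q I. apply I; auto.
  - intros S; apply AutInv_min; auto.
Qed.
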